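(* Let $p(z)=\sum_{i=0}^da_iz^i$ be a complex polynomial of degree $d\ge2$ such that $0$ is a periodic point of period $m_0$ with multiplier $\rho:=(p^{m_0})'(0)$, let $t_0\ge1$, $m_1:=m_0t_0$ and $b_i:=(p^{m_1-i-1})'(p^{i+1}(0))$ for $0\le i\le m_1-1$. Let $q$ be a polynomial, $\epsilon\in\mathbb{C}^*$, and for $s\in\mathbb{D}^*$ let $f(z,w):=(p(z)+s\epsilon w,q(w))$ and $g:=\phi^{-1}\circ f\circ\phi$ with $\phi(z,w)=(sz,w)$. Then for every $l\ge1$ there exists a polynomial $E_l$ in $(s,z,w)$ such that $$g^{m_1l}(z,w)=\Big(\rho^{t_0l}z+\epsilon\sum_{i=0}^{m_1-1}b_i\sum_{k=0}^{l-1}\rho^{t_0k}q^{i+(l-1-k)m_1}(w)+sE_l(s,z,w),\ q^{m_1l}(w)\Big).$$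
   Context: $\mathbb{D}^*$ is the punctured unit disc. Note $g(z,w)=(a_0s^{-1}+a_1z+\epsilon w+sE(s,z,w),q(w))$ with $E$ polynomial. *)

(* Defs.v *)
From mathcomp Require Import all_boot all_order all_algebra.
From mathcomp Require Import mpoly.
Set Implicit Arguments. Unset Strict Implicit. Unset Printing Implicit Defensive.
Import Order.TTheory GRing.Theory Num.Theory.
Local Open Scope ring_scope.

Definition piter (C : numClosedFieldType) (p : {poly C}) (n : nat) : {poly C} :=
  iter n (fun r => p \Po r) 'X.

Definition qiter (C : numClosedFieldType) (q : {poly C}) (n : nat) (w : C) : C :=
  iter n (fun x => q.[x]) w.

Definition periodic0 (C : numClosedFieldType) (p : {poly C}) (m0 : nat) : Prop :=
  (0 < m0)%N /\ (piter p m0).[0] = 0 /\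
  forall k, (0 < k < m0)%N -> (piter p k).[0] != 0.

Definition multiplier (C : numClosedFieldType) (p : {poly C}) (m0 : nat) : C :=
  (piter p m0)^`().[0].

Definition bcoef (C : numClosedFieldType) (p : {poly C}) (m1 i : nat) : C :=
  (piter p (m1 - i - 1))^`().[(piter p i.+1).[0]].

Definition fmap (C : numClosedFieldType) (p q : {poly C}) (eps s : C)
  (x : C * C) : C * C := (p.[x.1] + s * eps * x.2, q.[x.2]).

Definition phimap (C : numClosedFieldType) (s : C) (x : C * C) : C * C :=
  (s * x.1, x.2).
Definition phiinv (C : numClosedFieldType) (s : C) (x : C * C) : C * C :=
  (x.1 / s, x.2).

Definition gmap (C : numClosedFieldType) (p q : {poly C}) (eps s : C)
  (x : C * C) : C * C := phiinv s (fmap p q eps s (phimap s x)).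

Definition eval3 (C : numClosedFieldType) (E : {mpoly C[3]}) (s z w : C) : C :=
  E.@[fun i : 'I_3 => nth 0 [:: s; z; w] i].

(* Main.v *)
Require Import Defs.
From mathcomp Require Import all_boot all_order all_algebra.
From mathcomp Require Import mpoly.
From mathcomp Require Import ring zify.
Import Order.TTheory GRing.Theory Num.Theory.
Set Implicit Arguments. Unset Strict Implicit.
Local Open Scope ring_scope.

Definition PF (C : numClosedFieldType) (f : C -> C -> C -> C) :=
  exists E : {mpoly C[3]}, forall s z w, f s z w = eval3 E s z w.

Lemma PF_const (C : numClosedFieldType) (c : C) : PF (fun _ _ _ => c).
Proof. by exists c%:MP => s z w; rewrite /eval3 mevalC. Qed.

Lemma PF_s (C : numClosedFieldType) : PF (fun (s z w : C) => s).
Proof. by exists 'X_(0 : 'I_3) => s z w; rewrite /eval3 mevalXU. Qed.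
Lemma PF_z (C : numClosedFieldType) : PF (fun (s z w : C) => z).
Proof. by exists 'X_(1 : 'I_3) => s z w; rewrite /eval3 mevalXU. Qed.
Lemma PF_w (C : numClosedFieldType) : PF (fun (s z w : C) => w).
Proof. by exists 'X_(2 : 'I_3) => s z w; rewrite /eval3 mevalXU. Qed.

Lemma PF_add (C : numClosedFieldType) (f g : C -> C -> C -> C) :
  PF f -> PF g -> PF (fun s z w => f s z w + g s z w).
Proof. by move=> [E hE] [F hF]; exists (E + F) => s z w; rewrite /eval3 mevalD hE hF. Qed.
Lemma PF_mul (C : numClosedFieldType) (f g : C -> C -> C -> C) :
  PF f -> PF g -> PF (fun s z w => f s z w * g s z w).
Proof. by move=> [E hE] [F hF]; exists (E * F) => s z w; rewrite /eval3 mevalM hE hF. Qed.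

Lemma PF_ext (C : numClosedFieldType) (f g : C -> C -> C -> C) :
  PF f -> (forall s z w, f s z w = g s z w) -> PF g.
Proof. by move=> [E hE] h; exists E => s z w; rewrite -h. Qed.

Lemma PF_poly (C : numClosedFieldType) (P : {poly C}) (f : C -> C -> C -> C) :
  PF f -> PF (fun s z w => P.[f s z w]).
Proof.
move=> hf; elim/poly_ind: P => [|P c IH].
  by apply: PF_ext (PF_const 0) _ => s z w; rewrite horner0.
apply: PF_ext (PF_add (PF_mul IH hf) (PF_const c)) _ => s z w.
by rewrite hornerMXaddC.
Qed.
Lemma taylor2 (C : numClosedFieldType) (P : {poly C}) (c : C) :
  exists u : {poly C}, forall x,
    P.[x] = P.[c] + (x - c) * P^`().[c] + (x - c) ^+ 2 * u.[x].
Proof.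
have /factor_theorem [r hr] : root (P - P.[c]%:P) c.
  by rewrite /root hornerD hornerN hornerC subrr.
have hd : P^`().[c] = r.[c].
  have -> : P = r * ('X - c%:P) + P.[c]%:P by rewrite -hr subrK.
  by rewrite derivD derivC addr0 derivM derivXsubC mulr1 hornerD hornerM
       hornerXsubC subrr mulr0 add0r.
have /factor_theorem [u hu] : root (r - r.[c]%:P) c.
  by rewrite /root hornerD hornerN hornerC subrr.
exists u => x.
have e1 : P.[x] = r.[x] * (x - c) + P.[c].
  by rewrite -hornerXsubC -hornerM -hr hornerD hornerN hornerC subrK.
have e2 : r.[x] = u.[x] * (x - c) + r.[c].
  by rewrite -hornerXsubC -hornerM -hu hornerD hornerN hornerC subrK.
rewrite e1 e2 hd; ring.
Qed.

Definition ev (C : numClosedFieldType) (p : {poly C}) m x := (piter p m).[x].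
Definition Dg (C : numClosedFieldType) (p : {poly C}) m x := (piter p m)^`().[x].

Lemma evS (C : numClosedFieldType) (p : {poly C}) m x : ev p m.+1 x = p.[ev p m x].
Proof. by rewrite /ev /piter iterS horner_comp. Qed.
Lemma ev0 (C : numClosedFieldType) (p : {poly C}) x : ev p 0 x = x.
Proof. by rewrite /ev /piter /= hornerX. Qed.
Lemma evD (C : numClosedFieldType) (p : {poly C}) a b x : ev p (a + b) x = ev p a (ev p b x).
Proof. elim: a => [|a IH]; first by rewrite ev0. by rewrite addSn !evS IH. Qed.

Lemma Dg0 (C : numClosedFieldType) (p : {poly C}) x : Dg p 0 x = 1.
Proof. by rewrite /Dg /piter /= derivX hornerC. Qed.
Lemma DgS (C : numClosedFieldType) (p : {poly C}) m x :
  Dg p m.+1 x = p^`().[ev p m x] * Dg p m x.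
Proof. by rewrite /Dg /ev /piter iterS deriv_comp hornerM horner_comp. Qed.
Lemma DgD (C : numClosedFieldType) (p : {poly C}) a b x :
  Dg p (a + b) x = Dg p a (ev p b x) * Dg p b x.
Proof.
elim: a => [|a IH]; first by rewrite Dg0 mul1r.
by rewrite addSn !DgS IH evD mulrA.
Qed.

Lemma PF_qiter (C : numClosedFieldType) (q : {poly C}) k :
  PF (fun (s z w : C) => qiter q k w).
Proof.
elim: k => [|k IH]; first exact: PF_w.
by apply: PF_ext (PF_poly q IH) _ => s z w; rewrite /qiter iterS.
Qed.

Definition aseq (C : numClosedFieldType) (p q : {poly C}) (eps : C) k z w :=
  Dg p k 0 * z + eps * \sum_(j < k) Dg p (k - 1 - j) (ev p j.+1 0) * qiter q j w.

Lemma aseqS (C : numClosedFieldType) (p q : {poly C}) (eps : C) k z w :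
  aseq p q eps k.+1 z w = p^`().[ev p k 0] * aseq p q eps k z w + eps * qiter q k w.
Proof.
rewrite /aseq big_ord_recr /= subSS subn0 subnn Dg0 mul1r DgS.
have -> : \sum_(i < k) Dg p (k - i) (ev p i.+1 0) * qiter q i w =
   p^`().[ev p k 0] * \sum_(j < k) Dg p (k - 1 - j) (ev p j.+1 0) * qiter q j w.
  rewrite mulr_sumr; apply: eq_bigr => j _.
  have hj := ltn_ord j.
  have -> : (k - j = (k - 1 - j).+1)%N by lia.
  rewrite DgS -evD mulrA.
  have -> : (k - 1 - j + j.+1 = k)%N.
    by lia.
  by [].
ring.
Qed.

Lemma main_ind (C : numClosedFieldType) (p q : {poly C}) (eps : C) k :
  exists R E : C -> C -> C -> C, PF R /\ PF E /\
   forall s z w, s != 0 ->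
     iter k (gmap p q eps s) (z, w) = (ev p k 0 / s + R s z w, qiter q k w)
     /\ R s z w = aseq p q eps k z w + s * E s z w.
Proof.
elim: k => [|k [R [E [PR [PE IH]]]]].
  exists (fun s z w => z), (fun s z w => 0); split; first exact: PF_z.
  split; first exact: PF_const.
  move=> s z w _; split; last by rewrite /aseq big_ord0 Dg0 mul1r !mulr0 !addr0.
  by rewrite /= /ev /piter /= hornerX mul0r add0r.
set c := ev p k 0.
have [u hu] := taylor2 p c.
set Ru := fun s z w => (u.[c + s * R s z w]).
have PRu : PF Ru by apply: PF_poly; apply: PF_add (PF_const c) (PF_mul (PF_s C) PR).
exists (fun s z w => R s z w * p^`().[c] + s * (R s z w ^+ 2 * Ru s z w) + eps * qiter q k w).
exists (fun s z w => E s z w * p^`().[c] + R s z w ^+ 2 * Ru s z w).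
split.
  apply: PF_add; last exact: PF_mul (PF_const eps) (PF_qiter q k).
  apply: PF_add; first exact: PF_mul PR (PF_const _).
  apply: PF_mul (PF_s C) (PF_mul _ PRu).
  by apply: PF_ext (PF_mul PR PR) _ => s z w; rewrite expr2.
split.
  apply: PF_add; first exact: PF_mul PE (PF_const _).
  apply: PF_mul _ PRu.
  by apply: PF_ext (PF_mul PR PR) _ => s z w; rewrite expr2.
move=> s z w s0; have [h1 h2] := IH s z w s0.
split; last first.
  by rewrite aseqS h2 -/c; ring.
rewrite iterS h1 /gmap /phiinv /fmap /phimap /=.
have -> : s * (c / s + R s z w) = c + s * R s z w by field.
rewrite hu evS -/c.
have -> : c + s * R s z w - c = s * R s z w by ring.
congr pair; rewrite /qiter ?iterS //.
rewrite /Ru; field; exact: s0.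
Qed.

Lemma sum_blocks (C : numClosedFieldType) (F : nat -> C) m l :
  \sum_(j < m * l) F j = \sum_(u < l) \sum_(i < m) F (i + u * m)%N.
Proof.
elim: l => [|l IH]; first by rewrite muln0 !big_ord0.
rewrite big_ord_recr /= -IH -!(big_mkord xpredT).
rewrite (big_cat_nat _ (n := m * l)) //=; last by rewrite leq_mul2l leqnSn orbT.
congr (_ + _).
rewrite -{1}[(m * l)%N]add0n big_addn.
have -> : (m * l.+1 - m * l = m)%N by rewrite mulnS addnK.
by rewrite big_mkord; apply: eq_bigr => i _; rewrite mulnC.
Qed.

Lemma arith1 m1 l i k : (i < m1)%N -> (k < l)%N ->
  (m1 * l - 1 - (i + (l - 1 - k) * m1) = k * m1 + (m1 - i - 1))%N.
Proof.
move=> hi hk.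
have [r ->] : exists r, l = (k.+1 + r)%N by exists (l - k.+1)%N; lia.
have -> : (k.+1 + r - 1 - k = r)%N by lia.
rewrite mulnDr mulnS (mulnC r) (mulnC k).
lia.
Qed.

Lemma ev_per (C : numClosedFieldType) (p : {poly C}) m0 u :
  ev p m0 0 = 0 -> ev p (u * m0) 0 = 0.
Proof.
move=> h; elim: u => [|u IH]; first by rewrite mul0n ev0.
by rewrite mulSn evD IH.
Qed.

Lemma Dg_per (C : numClosedFieldType) (p : {poly C}) m0 u :
  ev p m0 0 = 0 -> Dg p (u * m0) 0 = (Dg p m0 0) ^+ u.
Proof.
move=> h; elim: u => [|u IH]; first by rewrite mul0n Dg0 expr0.
by rewrite mulSn DgD ev_per // IH exprS.
Qed.

Unset Implicit Arguments.

Theorem proposition4p2 (C : numClosedFieldType) (p q : {poly C})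
  (m0 t0 : nat) (eps : C) :
  (2 < size p)%N ->
  periodic0 p m0 ->
  (1 <= t0)%N ->
  eps != 0 ->
  forall l : nat, (1 <= l)%N ->
  exists E : {mpoly C[3]},
    forall s z w : C, s != 0 -> `|s| < 1 ->
      iter (m0 * t0 * l) (gmap p q eps s) (z, w) =
      ((multiplier p m0) ^+ (t0 * l) * z
       + eps * \sum_(i < m0 * t0)
                 bcoef p (m0 * t0) i *
                 \sum_(k < l) (multiplier p m0) ^+ (t0 * k) *
                     qiter q (i + (l - 1 - k) * (m0 * t0)) w
       + s * eval3 E s z w,
       qiter q (m0 * t0 * l) w).
Proof.
move=> _ [_ [hper _]] _ _ l _.
have hp : ev p m0 0 = 0 by exact: hper.
have [R [E [_ [[E0 hE0] H]]]] := main_ind p q eps (m0 * t0 * l).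
exists E0 => s z w s0 _.
have [-> ->] := H s z w s0.
rewrite -hE0.
have -> : ev p (m0 * t0 * l) 0 = 0 by rewrite -mulnA mulnC ev_per.
rewrite mul0r add0r; congr (_ + _, _).
rewrite /aseq; congr (_ + _).
  have -> : Dg p (m0 * t0 * l) 0 = Dg p ((t0 * l) * m0) 0 by rewrite [in RHS]mulnC mulnA.
  by rewrite Dg_per.
congr (_ * _).
rewrite (sum_blocks (fun j => Dg p (m0 * t0 * l - 1 - j) (ev p j.+1 0) * qiter q j w)) (reindex_inj rev_ord_inj) /= exchange_big /=.
apply: eq_bigr => i _; rewrite mulr_sumr; apply: eq_bigr => k _.
have hi := ltn_ord i; have hk := ltn_ord k.
have -> : (l - k.+1 = l - 1 - k)%N by lia.
set m1 := (m0 * t0)%N.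
set j := (i + (l - 1 - k) * m1)%N.
have -> : (m1 * l - 1 - j = k * m1 + (m1 - i - 1))%N.
  by rewrite /j arith1.
rewrite DgD.
have ej : ev p j.+1 0 = ev p i.+1 0.
  by rewrite /j -addSn evD /m1 mulnCA (mulnC m0 ((l - 1 - k) * t0)%N) ev_per.
rewrite ej -evD.
have -> : (m1 - i - 1 + i.+1 = m1)%N by lia.
have -> : ev p m1 0 = 0 by rewrite /m1 mulnC ev_per.
have -> : Dg p (k * m1) 0 = Dg p ((t0 * k) * m0) 0.
  by rewrite /m1 mulnCA mulnC (mulnC k).
rewrite Dg_per // /bcoef /multiplier -/(Dg p m0 0).
rewrite /Dg /ev; ring.
Qed.
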